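(* For every $n\ge 3$, the sun $S_n$ is not $(a,d)$-distance antimagic for any integers $a$ and $d\ge 0$.
   Context: The sun $S_n$ ($n\ge3$) is the graph on $2n$ vertices obtained from a cycle $x_1x_2\cdots x_n x_1$ by attaching a new pendant vertex $y_i$ adjacent only to $x_i$, for each $i=1,\dots,n$. For a graph $G=(V,E)$ with $v=|V|$ and a bijection $f:V\to\{1,\dots,v\}$, the vertex-weight of $x$ is $w(x)=\sum_{y\in N(x)}f(y)$ with $N(x)$ the set of neighbours of $x$. For integers $a$ and $d\ge0$, $f$ is an $(a,d)$-distance antimagic labeling if the multiset of vertex-weights equals $\{a,a+d,\dots,a+(v-1)d\}$; $G$ is $(a,d)$-distance antimagic if it admits such a labeling. *)

(* Defs.v *)
From HB Require Import structures.
From mathcomp Require Import all_boot all_order all_algebra.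
Set Implicit Arguments. Unset Strict Implicit. Unset Printing Implicit Defensive.
Import Order.TTheory GRing.Theory Num.Theory.

(* Vertices of the sun S_n: inl i = x_i (cycle vertex), inr i = y_i (pendant). *)
Definition sun_vertex (n : nat) : finType := ('I_n + 'I_n)%type.

Definition cyc_adj (n : nat) (i j : 'I_n) : bool :=
  (val j == (val i).+1 %% n) || (val i == (val j).+1 %% n).

Definition sun_adj (n : nat) : rel (sun_vertex n) :=
  fun u v =>
    match u, v with
    | inl i, inl j => cyc_adj i j
    | inl i, inr j => i == j
    | inr i, inl j => i == j
    | inr _, inr _ => false
    end.

Definition vweight (V : finType) (e : rel V) (f : V -> nat) (x : V) : nat :=
  \sum_(y : V | e x y) f y.

Definition is_vlabeling (V : finType) (f : V -> nat) : Prop :=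
  injective f /\ (forall x, 0 < f x <= #|V|)%N.

Definition ad_distance_antimagic_labeling (V : finType) (e : rel V)
    (a d : int) (f : V -> nat) : Prop :=
  is_vlabeling f /\
  perm_eq [seq (Posz (vweight e f x)) | x <- enum V]
          [seq (a + (Posz k) * d)%R | k <- iota 0 #|V|].

Definition ad_distance_antimagic (V : finType) (e : rel V) (a d : int) : Prop :=
  exists f : V -> nat, ad_distance_antimagic_labeling e a d f.

(* Main.v *)
Require Import Defs.
From HB Require Import structures.
From mathcomp Require Import all_boot all_order all_algebra zify.

Lemma sum_uniq_ge (s : seq nat) : uniq s -> (size s * (size s).-1 <= 2 * sumn s)%N.
Proof.
move: {2}(size s) (erefl (size s)) => m; elim: m s => [|m IH] s hs hu.
  by rewrite hs.
have [x xs xm] : exists2 x, x \in s & (m <= x)%N.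
  case: (boolP (has (fun x => m <= x)%N s)) => [/hasP[x ? ?]|hn]; first by exists x.
  have : (size s <= size (iota 0 m))%N.
    apply: uniq_leq_size => // y ys; rewrite mem_iota /=.
    by apply: contraNT hn; rewrite -leqNgt => hy; apply/hasP; exists y.
  by rewrite size_iota hs ltnn.
have hp := perm_to_rem xs.
rewrite (perm_sumn hp) /=.
have hr : size (rem x s) = m by rewrite size_rem // hs.
have := IH (rem x s) hr (rem_uniq x hu).
rewrite hr hs /=; nia.
Qed.

Lemma ordS_neq_pred n (i : 'I_n) : (3 <= n)%N -> ordS i != ord_pred i.
Proof.
move=> hn; apply/eqP => E.
have : ordS (ordS i) = i by rewrite E ord_predK.
move/(congr1 val) => /=.
have hi := ltn_ord i.
case: (ltnP i.+1 n) => h1.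
  rewrite (modn_small h1).
  case: (ltnP i.+2 n) => h2; first by rewrite (modn_small h2); lia.
  have -> : i.+2 = n by lia.
  rewrite modnn; lia.
have -> : i.+1 = n by lia.
rewrite modnn modn_small; lia.
Qed.

Lemma sum_inj_ge (T : finType) (g : T -> nat) : injective g ->
  (#|T| * #|T|.-1 <= 2 * \sum_(x : T) g x)%N.
Proof.
move=> gi.
have hu : uniq (map g (enum T)) by rewrite map_inj_uniq ?enum_uniq.
have := @sum_uniq_ge _ hu.
by rewrite size_map -cardT sumnE big_map big_enum.
Qed.
Lemma tri N : (2 * \sum_(0 <= k < N) k = N * N.-1)%N.
Proof.
elim: N => [|N IH]; first by rewrite big_geq.
rewrite big_nat_recr //= mulnDr IH; case: N {IH} => //= N; nia.
Qed.
Import GRing.Theory.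
Lemma sumIota (a : int) (dn N : nat) :
  (\sum_(j <- iota 0 N) (a + Posz j * Posz dn) = a *+ N + Posz (\sum_(0 <= j < N) j) * Posz dn)%R.
Proof.
elim: N => [|N IH]; first by rewrite big_nil big_geq.
have -> : iota 0 N.+1 = iota 0 N ++ [:: N] by rewrite -addn1 iotaD.
rewrite big_cat /= big_seq1 IH big_nat_recr //=.
rewrite mulrSr PoszD mulrDl; lia.
Qed.
Lemma e1L n : (2 < n)%N -> ((n + n) * (n + n).-1 = 4 * (n * n) - 2 * n)%N.
Proof. case: n => // m _; rewrite addSn /=. nia. Qed.
Lemma e2L n : (2 < n)%N -> (n * n.-1 = n * n - n)%N.
Proof. case: n => // m _ /=. nia. Qed.
Import Order.TTheory GRing.Theory Num.Theory.
Theorem mainTheorem7 (n : nat) (hn : (3 <= n)%N) (a d : int) (hd : (0 <= d)%R) :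
  ~ ad_distance_antimagic (@sun_adj n) a d.
Proof.
case: d hd => [dn _|//].
case=> f [[finj frange] hperm].
have cardV : #|sun_vertex n| = (n + n)%N by rewrite card_sum card_ord.
rewrite cardV in hperm frange.
set w := vweight (@sun_adj n) f in hperm.
have wr : forall i, w (inr i) = f (inl i).
  move=> i; rewrite /w /vweight big_sumType /= big_pred0_eq addn0.
  by rewrite (big_pred1 i) // => j; rewrite /= eq_sym.
have wl : forall i, (f (inl (ordS i)) + f (inl (ord_pred i)) + f (inr i) <= w (inl i))%N.
  move=> i.
  have hne := @ordS_neq_pred n i hn.
  have a1 : sun_adj (inl i) (inl (ordS i)) by rewrite /sun_adj /cyc_adj /= eqxx.
  have a2 : sun_adj (inl i) (inl (ord_pred i)).
    rewrite /sun_adj /cyc_adj; apply/orP; right.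
    by rewrite -[X in val X == _](ord_predK i).
  rewrite /w /vweight (bigD1 (inl (ordS i))) //= (bigD1 (inl (ord_pred i))) /=; last first.
    by apply/andP; split=> //; rewrite (inj_eq (@inl_inj _ _)) eq_sym.
  rewrite [X in _ <= _ + (_ + X)](bigD1 (inr i)) /= ?eqxx //.
  by rewrite !addnA leq_addr.
have hmem : forall v, exists k, (Posz (w v) == a + (Posz k) * Posz dn)%R.
  move=> v.
  have : Posz (w v) \in [seq Posz (w x) | x <- enum (sun_vertex n)].
    by apply/mapP; exists v => //; rewrite mem_enum.
  rewrite (perm_mem hperm) => /mapP [k _ ->]; by exists k.
have eZ : forall (I : finType) (F : I -> nat), Posz (\sum_i F i) = (\sum_i Posz (F i))%R.
  by move=> I F; apply: (big_morph Posz PoszD).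
set X := \sum_(i < n) f (inl i).
set Y := \sum_(i < n) f (inr i).
set C := \sum_(i < n) w (inl i).
have hC : (2 * X + Y <= C)%N.
  have h : (\sum_(i<n) (f (inl (ordS i)) + f (inl (ord_pred i)) + f (inr i)) <= C)%N.
    by apply: leq_sum => i _; exact: wl.
  apply: leq_trans h.
  have e1 : (\sum_(i<n) f (inl (ordS i)) = X)%N.
  by rewrite /X [RHS](reindex_inj (@ordS_inj n)).
  have e2 : (\sum_(i<n) f (inl (ord_pred i)) = X)%N by rewrite /X [RHS](reindex_inj (@ord_pred_inj n)).
  rewrite !big_split /= e1 e2 -/Y; lia.
have hCX : (\sum_(v : sun_vertex n) w v = C + X)%N.
  by rewrite big_sumType /=; congr (_ + _); apply: eq_bigr => i _; rewrite wr.
have hF1 : (\sum_(v : sun_vertex n) f v = X + Y)%N by rewrite big_sumType.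
have hF2 : (\sum_(v : sun_vertex n) f v = \sum_(v : sun_vertex n) (f v - 1) + (n + n))%N.
  rewrite -cardV -sum1_card -big_split /=; apply: eq_bigr => v _.
  by have := frange v; lia.
have hF3 : ((n + n) * (n + n).-1 <= 2 * \sum_(v : sun_vertex n) (f v - 1))%N.
  rewrite -cardV; apply: sum_inj_ge => u v /eqP huv; apply: finj.
  by have := frange u; have := frange v; lia.
have hs : (\sum_(x <- [seq Posz (w x) | x <- enum (sun_vertex n)]) x =
          \sum_(x <- [seq (a + Posz k * Posz dn)%R | k <- iota 0 (n + n)]) x)%R.
  exact: perm_big hperm.
rewrite !big_map -enumT big_enum /= -eZ hCX in hs.
rewrite sumIota in hs.
have hT := tri (n + n).
set T2 := (\sum_(0 <= j < n + n) j)%N in hs hT.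
have hk : forall i, exists k, (Posz (f (inl i)) == a + Posz k * Posz dn)%R.
  by move=> i; rewrite -wr; apply: hmem.
pose kp i := xchoose (hk i).
have hkp : forall i, (Posz (f (inl i)) = a + Posz (kp i) * Posz dn)%R.
  by move=> i; apply/eqP; exact: (xchooseP (hk i)).
have hX : (Posz X = a *+ n + Posz (\sum_(i < n) kp i) * Posz dn)%R.
  rewrite eZ (eq_bigr _ (fun i _ => hkp i)) big_split /= sumr_const card_ord.
  by rewrite eZ big_distrl.
set K := (\sum_(i < n) kp i)%N in hX.
have hK : dn = 0%N \/ (n * n.-1 <= 2 * K)%N.
  case: (posnP dn) => [->|dpos]; [by left|right].
  rewrite -{1 2}(card_ord n); apply: sum_inj_ge => i j E.
  have h : (inl i : sun_vertex n) = inl j.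
    by apply: finj; apply/eqP; rewrite -eqz_nat !hkp E.
  exact: inl_inj h.
have d3 : (3 <= dn)%N.
  rewrite leqNgt; apply/negP => hd2.
  set G := (\sum_(v : sun_vertex n) (f v - 1))%N in hF2 hF3.
  have hn2 : (2 * (K * dn) + (X + Y) <= T2 * dn)%N.
    have : (Posz (2 * (K * dn) + (X + Y)) <= Posz (T2 * dn))%R.
      rewrite !PoszD !PoszM. lia.
    by rewrite lez_nat.
  have : dn = 0%N \/ dn = 1%N \/ dn = 2%N by lia.
  have e1 : ((n + n) * (n + n).-1 = 4 * (n * n) - 2 * n)%N.
    exact: e1L.
  have e2 : (n * n.-1 = n * n - n)%N by exact: e2L.
  rewrite e1 in hT hF3; rewrite e2 in hK.
  move: (n * n) hT hF3 hK => q hT hF3 hK.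
  clear -hT hF3 hK hn2 hF1 hF2 hn.
  case=> [E|[E|E]]; rewrite E in hn2 hK; case: hK => hK //; lia.
have n0 : (0 < n)%N by lia.
case: (@arg_minnP _ (Ordinal n0) xpredT kp isT) => i0 _ hmin.
have kinj : injective kp.
  move=> i j E.
  have h : (inl i : sun_vertex n) = inl j.
    by apply: finj; apply/eqP; rewrite -eqz_nat !hkp E.
  exact: inl_inj h.
have hwin : forall i, ((kp i - kp i0) * 3 <= n + n - 1)%N.
  move=> i.
  have h1 := hkp i; have h2 := hkp i0.
  have r1 := frange (inl i); have r2 := frange (inl i0).
  have hm := hmin i isT.
  have e : (kp i * dn + f (inl i0) = kp i0 * dn + f (inl i))%N.
    apply/eqP; rewrite -eqz_nat !PoszD !PoszM h1 h2; apply/eqP.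
    lia.
  have h3 : ((kp i - kp i0) * 3 <= (kp i - kp i0) * dn)%N by rewrite leq_mul2l d3 orbT.
  rewrite mulnBl in h3.
  clear -h3 e r1 r2 hm hn.
  have hm' : (kp i0 * dn <= kp i * dn)%N by rewrite leq_mul2r hm orbT.
  lia.
have hu : uniq [seq kp i - kp i0 | i <- enum 'I_n].
  rewrite map_inj_uniq ?enum_uniq // => i j E.
  apply: kinj; have := hmin i isT; have := hmin j isT; lia.
have hsub : {subset [seq kp i - kp i0 | i <- enum 'I_n] <= iota 0 n.-1}.
  move=> y /mapP [i _ ->]; rewrite mem_iota /=.
  have := hwin i; lia.
have := uniq_leq_size hu hsub.
rewrite size_map size_enum_ord size_iota; lia.
Qed.
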